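(* Let $X$ be a finite set and $t$ a full support transition function. Then $t$ is menu invariant (i.e. the stationary distributions $\nu_A$ of $M_A$ coincide for all $A\in\mathcal{X}_2$) if and only if $t$ satisfies no investment: for every strict investment plan $i$ and every $\delta\in(0,1)$ there exists $\succ\in\mathcal{L}(X)$ such that $$\sum_{(A,\succ')\in\mathcal{X}_2\times\mathcal{L}(X)}\delta\, i(A,\succ')\,t_{\succ'}(M(\succ,A),\succ)<\sum_{A\in\mathcal{X}_2} i(A,\succ).$$
   Context: $X$ is a finite set; $\mathcal{X}_2$ is the collection of subsets of $X$ with at least two elements; $\mathcal{L}(X)$ the linear orders on $X$; $M(\succ,A)$ the $\succ$-maximal element of $A$. A transition function is $t:X\times\mathcal{L}(X)\to\Delta(\mathcal{L}(X))$, full support if all its values have full support; $t_{\succ'}(x,\succ)$ is the probability of $\succ'$ under $t(x,\succ)$. For $A\in\mathcal{X}_2$, $M_A$ is the Markov matrix on $\mathcal{L}(X)$ with entries $m_A(\succ,\succ')=t_{\succ'}(M(\succ,A),\succ)$, which for full support $t$ has a unique stationary distribution $\nu_A$. An investment plan is a function $i:\mathcal{X}_2\times\mathcal{L}(X)\to\mathbb{R}_{\ge 0}$; it is strict if it is not identically zero. *)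

(* Defs.v *)
From HB Require Import structures.
From mathcomp Require Import all_boot all_order all_algebra.
From mathcomp Require Import reals.
Set Implicit Arguments. Unset Strict Implicit. Unset Printing Implicit Defensive.
Import Order.TTheory GRing.Theory Num.Theory.
Local Open Scope ring_scope.

Section Defs.
Variable X : finType.

(* A (strict) linear order on X, encoded by its boolean graph: (x,y) is
   true iff x ≻ y.  Irreflexive, transitive, total on distinct elements. *)
Definition is_linear_order (f : {ffun X * X -> bool}) : bool :=
  [&& [forall x, ~~ f (x, x)],
      [forall x, forall y, forall z, f (x, y) && f (y, z) ==> f (x, z)] &
      [forall x, forall y, (x != y) ==> f (x, y) || f (y, x)]].

Definition linord : finType := {f : {ffun X * X -> bool} | is_linear_order f}.

Definition gt_lin (r : linord) (x y : X) : bool := (val r) (x, y).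

Definition in_X2 (A : {set X}) : bool := (1 < #|A|)%N.

Definition maxel (r : linord) (A : {set X}) : option X :=
  [pick x in A | [forall y in A, (y != x) ==> gt_lin r x y]].

Variable R : realType.

(* A transition function t : X × L(X) -> Δ(L(X)), curried:
   t x r r' = t_{r'}(x, r), probability of r' under t(x, r). *)
Definition transition_fn (t : X -> linord -> linord -> R) : Prop :=
  forall x r, (forall r', 0 <= t x r r') /\ \sum_(r' : linord) t x r r' = 1.

Definition full_support (t : X -> linord -> linord -> R) : Prop :=
  forall x r r', 0 < t x r r'.

Definition markov_entry (t : X -> linord -> linord -> R) (A : {set X})
    (r r' : linord) : R :=
  match maxel r A with Some x => t x r r' | None => 0 end.

Definition stationary (t : X -> linord -> linord -> R) (A : {set X})
    (nu : linord -> R) : Prop :=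
  (forall r, 0 <= nu r) /\ \sum_(r : linord) nu r = 1 /\
  forall r', \sum_(r : linord) nu r * markov_entry t A r r' = nu r'.

(* Menu invariance: the (unique, by full support) stationary distributions
   nu_A coincide for all A in X_2. *)
Definition menu_invariant (t : X -> linord -> linord -> R) : Prop :=
  forall A B : {set X}, in_X2 A -> in_X2 B ->
    forall nu, stationary t A nu -> stationary t B nu.

Definition strict_investment_plan (i : {set X} -> linord -> R) : Prop :=
  (forall A r, in_X2 A -> 0 <= i A r) /\
  (exists A r, in_X2 A /\ i A r != 0).

Definition no_investment (t : X -> linord -> linord -> R) : Prop :=
  forall (i : {set X} -> linord -> R) (delta : R),
    strict_investment_plan i -> 0 < delta < 1 ->
    exists r : linord,
      \sum_(A : {set X} | in_X2 A) \sum_(r' : linord)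
          delta * i A r' * markov_entry t A r r'
      < \sum_(A : {set X} | in_X2 A) i A r.

End Defs.

(* Main.v *)
Require Import Defs.
From HB Require Import structures.
From mathcomp Require Import all_boot all_order all_algebra.
From mathcomp Require Import reals.
From Stdlib Require Import Classical.
From mathcomp Require Import ring lra.
Import Order.TTheory GRing.Theory Num.Theory.
Local Open Scope ring_scope.
Set Implicit Arguments. Unset Strict Implicit. Unset Printing Implicit Defensive.
Lemma LA (R : fieldType) (I J : finType) (K : I -> J -> R) :
  (forall w : I -> R, (forall j, \sum_i w i * K i j = 0) -> forall i, w i = 0) ->
  forall g : I -> R, exists z : J -> R, forall i, \sum_j K i j * z j = g i.
Proof.
move=> Hw g.
pose A : 'M[R]_(#|I|, #|J|) := \matrix_(a, b) K (enum_val a) (enum_val b).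
have fA : row_free A.
  apply: inj_row_free => v vA; apply/rowP => a; rewrite mxE.
  have := Hw (fun i => v 0 (enum_rank i)) => /(_ _ (enum_val a)).
  rewrite enum_valK; apply => j.
  move/matrixP: vA => /(_ 0 (enum_rank j)); rewrite !mxE => H; rewrite -[RHS]H.
  rewrite (reindex (@enum_val I predT)) /=; last by apply: onW_bij; exact: enum_val_bij.
  by apply: eq_bigr => b _; rewrite enum_valK mxE enum_rankK.
case/row_freeP: fA => B AB.
pose gc : 'cV[R]_#|I| := \col_a g (enum_val a).
exists (fun j => (B *m gc) (enum_rank j) 0) => i.
have /matrixP/(_ (enum_rank i) 0) := congr1 (mulmx^~ gc) AB.
rewrite mul1mx -mulmxA mxE !mxE enum_rankK => H; rewrite -[RHS]H.
rewrite (reindex (@enum_val J predT)) /=; last by apply: onW_bij; exact: enum_val_bij.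
by apply: eq_bigr => b _; rewrite enum_valK [in RHS]mxE enum_rankK.
Qed.
Section Stoch.
Variables (R : realType) (T : finType) (m : T -> T -> R).
Hypothesis mpos : forall i j, 0 < m i j.
Hypothesis mrow : forall i, \sum_j m i j = 1.

Definition inv (w : T -> R) := forall j, \sum_i w i * m i j = w j.

Lemma abs_inv w : inv w -> inv (fun i => `|w i|).
Proof.
move=> Hw.
have le j : `|w j| <= \sum_i `|w i| * m i j.
  rewrite -{1}Hw; apply: le_trans (ler_norm_sum _ _ _) _.
  by apply: ler_sum => i _; rewrite normrM (gtr0_norm (mpos _ _)).
have : \sum_j (\sum_i `|w i| * m i j - `|w j|) = 0.
  rewrite sumrB exchange_big /=.
  rewrite (eq_bigr (fun i => `|w i|)) ?subrr // => i _.
  by rewrite -mulr_sumr mrow mulr1.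
move/eqP; rewrite psumr_eq0 => [|j _]; last by rewrite subr_ge0.
move/allP => H j; apply/eqP; rewrite -subr_eq0; exact: H (mem_index_enum j).
Qed.

Lemma pos_inv p i0 : inv p -> (forall i, 0 <= p i) -> 0 < p i0 -> forall j, 0 < p j.
Proof.
move=> Hp p0 pi0 j; rewrite -Hp (bigD1 i0) //=.
apply: lt_le_trans (_ : p i0 * m i0 j <= _); first by rewrite mulr_gt0.
rewrite lerDl sumr_ge0 // => i _; rewrite mulr_ge0 // ltW //.
Qed.

Lemma inv_lin a b u v : inv u -> inv v -> inv (fun i => a * u i + b * v i).
Proof.
move=> Hu Hv j; rewrite -Hu -Hv !mulr_sumr -big_split /=.
by apply: eq_bigr => i _; rewrite mulrDl !mulrA.
Qed.

Lemma inv_sum0 u j0 : inv u -> \sum_i u i = 0 -> 0 < u j0 -> False.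
Proof.
move=> Hu s0 uj0.
have Hp := inv_lin 1 1 (abs_inv Hu) Hu.
have p0 i : 0 <= 1 * `|u i| + 1 * u i by have := ler_norm (- u i); rewrite normrN !mul1r; lra.
have pj0 : 0 < 1 * `|u j0| + 1 * u j0 by rewrite !mul1r gtr0_norm // addr_gt0.
have all_pos j : 0 < u j.
  have := pos_inv Hp p0 pj0 j; rewrite !mul1r.
  case: (ltP 0 (u j)) => // uj; rewrite ler0_norm // addNr ltxx //.
move: s0; rewrite (bigD1 j0) //= => /eqP; rewrite paddr_eq0 ?(ltW uj0) ?sumr_ge0 // => [/andP[/eqP h _]|i _].
  by move: uj0; rewrite h ltxx.
exact: ltW.
Qed.

Lemma uniq_inv nu w : inv nu -> \sum_i nu i = 1 -> inv w ->
  forall j, w j = (\sum_i w i) * nu j.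
Proof.
move=> Hn s1 Hw j; set c := \sum_i w i.
have Hu := inv_lin 1 (- c) Hw Hn.
have s0 : \sum_i (1 * w i + - c * nu i) = 0.
  by rewrite big_split /= -!mulr_sumr s1 mul1r mulr1 subrr.
apply/eqP; rewrite -subr_eq0; apply/eqP.
case: (ltgtP (w j - c * nu j) 0) => // h.
- have Hu' := inv_lin (-1) 0 Hu Hu.
  exfalso; apply: (inv_sum0 (j0 := j) Hu').
    under eq_bigr do rewrite mul0r addr0 mulN1r. by rewrite sumrN s0 oppr0.
  by rewrite mul0r addr0 mul1r mulN1r oppr_gt0 mulNr.
- exfalso; apply: (inv_sum0 (j0 := j) Hu s0).
  by rewrite mul1r mulNr.
Qed.

Lemma sum_delta (w : T -> R) j : \sum_i w i * (i == j)%:R = w j.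
Proof.
rewrite (bigD1 j) //= eqxx mulr1 big1 ?addr0 // => i /negbTE ->; by rewrite mulr0.
Qed.

Lemma exists_stat (r0 : T) :
  exists nu, (forall i, 0 <= nu i) /\ \sum_i nu i = 1 /\ inv nu.
Proof.
have [w [j0 wj0] Hw] : exists2 w, (exists j, w j != 0) & inv w.
  apply: NNPP => Hno.
  have [|z Hz] := LA (K := fun i j => m i j - (i == j)%:R) _ (fun _ => 1).
    move=> w Hk i; apply: NNPP => wi; apply: Hno; exists w; first by exists i; apply/eqP.
    move=> j; have := Hk j.
    under eq_bigr do rewrite mulrBr.
    by rewrite sumrB sum_delta => /eqP; rewrite subr_eq0 => /eqP.
  have [i _ Hi] := @arg_maxP _ R T r0 xpredT z isT.
  have := Hz i.
  under eq_bigr do rewrite mulrBl.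
  rewrite sumrB [X in _ - X](eq_bigr (fun j => z j * (j == i)%:R)); last first.
    by move=> j _; rewrite mulrC eq_sym.
  rewrite sum_delta => H.
  have : \sum_j m i j * z j <= z i.
    rewrite -[leRHS]mul1r -(mrow i) mulr_suml; apply: ler_sum => j _.
    by apply: ler_wpM2l; [exact: ltW | exact: Hi].
  rewrite -subr_le0 H; lra.
have Ha := abs_inv Hw.
set S := \sum_i `|w i|.
have S0 : 0 < S.
  rewrite /S (bigD1 j0) //=; have h1 : 0 < `|w j0| by rewrite normr_gt0.
  have h2 : 0 <= \sum_(i | i != j0) `|w i| by apply: sumr_ge0. lra.
exists (fun i => S^-1 * `|w i|); split; [|split].
- by move=> i; rewrite mulr_ge0 // invr_ge0 ltW.
- by rewrite -mulr_sumr mulVf // gt_eqF.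
- move=> j; have := inv_lin (S^-1) 0 Ha Ha j.
  under eq_bigr do rewrite mul0r addr0.
  by rewrite mul0r addr0.
Qed.
End Stoch.
Lemma maxel_some (X : finType) (r : linord X) (A : {set X}) x0 :
  x0 \in A -> exists x, maxel r A = Some x.
Proof.
move=> x0A.
case/and3P: (valP r) => /forallP irr /forallP tr /forallP tot.
pose F x := #|[set y in A | gt_lin r x y]|.
have [x xA xmax] := arg_maxnP F x0A.
have Hx : [forall y in A, (y != x) ==> gt_lin r x y].
  apply/forall_inP => y yA; apply/implyP => yx.
  apply/negPn/negP => nxy.
  have gyx : gt_lin r y x.
    move: (tot x) => /forallP /(_ y) /implyP; rewrite eq_sym => /(_ yx).
    by move/orP => [h|h]; [move: nxy; rewrite /gt_lin h | ].
  have : [set z in A | gt_lin r x z] \proper [set z in A | gt_lin r y z].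
    apply/properP; split.
      apply/subsetP => z; rewrite !inE => /andP[-> gxz] /=.
      by move: (tr y) => /forallP /(_ x) /forallP /(_ z) /implyP; apply; move: gyx; rewrite /gt_lin => ->.
    have xA2 : x \in A := xA. exists x; rewrite !inE xA2 /=; first by move: gyx; rewrite /gt_lin => ->.
    by rewrite /gt_lin (negbTE (irr x)).
  move/proper_card; rewrite ltnNge.
  by move: (xmax y yA); rewrite /F => h /negP; apply; exact: h.
rewrite /maxel; case: pickP => [x' _|H]; first by exists x'.
have xA2 : x \in A := xA. by move: (H x); rewrite xA2 Hx.
Qed.

Lemma markov_facts (X : finType) (R : realType) (t : X -> linord X -> linord X -> R) A :
  transition_fn t -> full_support t -> in_X2 A ->
  (forall r r', 0 < markov_entry t A r r') /\
  (forall r, \sum_r' markov_entry t A r r' = 1).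
Proof.
move=> Ht Hf AX.
have [x0 x0A] : exists x0, x0 \in A.
  by apply/card_gt0P; apply: ltn_trans AX.
split.
- move=> r r'; rewrite /markov_entry; have [x ->] := maxel_some r x0A; exact: Hf.
- move=> r; rewrite /markov_entry; have [x ->] := maxel_some r x0A; exact: (Ht x r).2.
Qed.

Lemma sum_delta' (R : realType) (T : finType) (w : T -> R) j :
  \sum_i (j == i)%:R * w i = w j.
Proof.
rewrite (bigD1 j) //= eqxx mul1r big1 ?addr0 // => i; rewrite eq_sym => /negbTE ->; by rewrite mul0r.
Qed.

Lemma sum2 (X : finType) (R : realType) (A B : {set X}) (F : {set X} -> R) :
  in_X2 A -> in_X2 B -> A != B ->
  (forall C, C != A -> C != B -> F C = 0) ->
  \sum_(C | in_X2 C) F C = F A + F B.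
Proof.
move=> AX BX AB HF.
rewrite (bigD1 A) //= (bigD1 B) /=; last by rewrite BX eq_sym.
rewrite big1 ?addr0 // => C /andP[/andP[_ CA] CB]; exact: HF.
Qed.

Theorem theorem2 (X : finType) (R : realType)
    (t : X -> linord X -> linord X -> R) :
  transition_fn t -> full_support t ->
  (menu_invariant t <-> no_investment t).
Proof.
move=> Ht Hf; split.
- move=> Hmi i delta [ipos [A0 [r0 [A0X iA0]]]] /andP[d0 d1].
  have [mpos mrow] := markov_facts Ht Hf A0X.
  have [nu [nu0 [nu1 nuinv]]] := exists_stat mpos mrow r0.
  have nuC C : in_X2 C -> inv (markov_entry t C) nu.
    by move=> CX; case: (Hmi A0 C A0X CX nu (conj nu0 (conj nu1 nuinv))) => _ [].
  apply: NNPP => Hno.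
  set S := \sum_(C | in_X2 C) \sum_r i C r * nu r.
  have [i0 nui0] : exists i0, 0 < nu i0.
    apply: NNPP => H.
    have : \sum_r nu r <= 0.
      apply: sumr_le0 => r _; rewrite leNgt; apply/negP => h; apply: H; by exists r.
    by rewrite nu1 ler10.
  have nupos := pos_inv mpos nuinv nu0 nui0.
  have S0 : 0 < S.
    rewrite /S (bigD1 A0) //= (bigD1 r0) //=.
    have h1 : 0 < i A0 r0 * nu r0 by rewrite mulr_gt0 // lt_def iA0 ipos.
    have h2 : 0 <= \sum_(r | r != r0) i A0 r * nu r.
      by apply: sumr_ge0 => r _; rewrite mulr_ge0 ?ipos ?nu0.
    have h3 : 0 <= \sum_(C | in_X2 C && (C != A0)) \sum_r i C r * nu r.
      apply: sumr_ge0 => C /andP[CX _]; apply: sumr_ge0 => r _.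
      by rewrite mulr_ge0 ?ipos ?nu0.
    lra.
  have key : S <= delta * S.
    have E1 : \sum_r nu r * (\sum_(A | in_X2 A) i A r) = S.
      under eq_bigr do rewrite mulr_sumr.
      rewrite exchange_big /=; apply: eq_bigr => C _; apply: eq_bigr => r _.
      by rewrite mulrC.
    have E2 : \sum_r nu r * (\sum_(A | in_X2 A) \sum_r' delta * i A r' * markov_entry t A r r') = delta * S.
      rewrite /S mulr_sumr.
      under eq_bigr do rewrite mulr_sumr.
      rewrite exchange_big /=; apply: eq_bigr => C CX.
      under eq_bigr do rewrite mulr_sumr.
      rewrite exchange_big mulr_sumr /=; apply: eq_bigr => r' _.
      rewrite -(nuC C CX r') mulr_sumr mulr_sumr; apply: eq_bigr => r _.
      by ring.
    rewrite -[X in X <= _]E1 -E2; apply: ler_sum => r _; apply: ler_wpM2l; first exact: nu0.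
    rewrite leNgt; apply/negP => h; apply: Hno; by exists r.
  have : delta * S < S by rewrite -[ltRHS]mul1r ltr_pM2r.
  lra.
- move=> Hni A B AX BX nu [nu0 [nu1 nuinv]]; split; first exact: nu0.
  split; first exact: nu1.
  apply: NNPP => Hnot.
  have [r0 _] : exists r0 : linord X, true.
    case: (pickP (fun _ : linord X => true)) => [r _|H]; first by exists r.
    by move: nu1; rewrite big_pred0 // => /eqP; rewrite eq_sym oner_eq0.
  case: (A =P B) => [eAB|nAB]; first by apply: Hnot; rewrite -eAB.
  have [mApos mArow] := markov_facts Ht Hf AX.
  have [mBpos mBrow] := markov_facts Ht Hf BX.
  pose mA := markov_entry t A; pose mB := markov_entry t B.
  pose K := fun (i : linord X) (j : linord X + linord X) =>
    match j with inl j => mA i j - (i == j)%:R | inr j => mB i j - (i == j)%:R end.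
  have [|z Hz] := LA (K := K) _ (fun _ => 1).
    move=> w Hw.
    have wA : inv mA w.
      move=> j; have := Hw (inl j); rewrite /K.
      under eq_bigr do rewrite mulrBr.
      by rewrite sumrB sum_delta => /eqP; rewrite subr_eq0 => /eqP.
    have wB : inv mB w.
      move=> j; have := Hw (inr j); rewrite /K.
      under eq_bigr do rewrite mulrBr.
      by rewrite sumrB sum_delta => /eqP; rewrite subr_eq0 => /eqP.
    have Hu := uniq_inv mApos mArow nuinv nu1 wA.
    move=> i; case: (\sum_i w i =P 0) => [c0|cn0].
      by rewrite Hu c0 mul0r.
    exfalso; apply: Hnot => j.
    have nuE k : nu k = (\sum_i w i)^-1 * w k.
      by rewrite Hu mulrA mulVf ?mul1r //; apply/eqP.
    rewrite nuE -(wB j) mulr_sumr; apply: eq_bigr => k _.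
    by rewrite nuE mulrA.
  pose x r := z (inl r); pose y r := z (inr r).
  have Heq r : \sum_r' mA r r' * x r' - x r + (\sum_r' mB r r' * y r' - y r) = 1.
    have := Hz r; rewrite big_sumType /= /K.
    under eq_bigr do rewrite mulrBl.
    under [X in _ + X = _]eq_bigr do rewrite mulrBl.
    by rewrite !sumrB !sum_delta'.
  set c := 1 + \sum_r (`|x r| + `|y r|).
  have bnd r : `|x r| + `|y r| <= \sum_r (`|x r| + `|y r|).
    rewrite (bigD1 r) //= lerDl; apply: sumr_ge0 => k _; exact: addr_ge0.
  pose x' r := x r + c; pose y' r := y r + c.
  have x'1 r : 1 <= x' r.
    have := bnd r; have := ler_norm (- x r); rewrite normrN; have := normr_ge0 (y r).
    rewrite /x' /c; lra.
  have y'1 r : 1 <= y' r.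
    have := bnd r; have := ler_norm (- y r); rewrite normrN; have := normr_ge0 (x r).
    rewrite /y' /c; lra.
  pose ip (C : {set X}) r := if C == A then x' r else if C == B then y' r else 0.
  pose s r := x' r + y' r.
  pose S := \sum_r s r.
  have sS r : s r <= S.
    rewrite /S (bigD1 r) //= lerDl; apply: sumr_ge0 => k _.
    have := x'1 k; have := y'1 k; rewrite /s; lra.
  have S0 : 0 < S by have := sS r0; have := x'1 r0; have := y'1 r0; rewrite /s; lra.
  have S10 : 0 < S + 1 by lra.
  pose delta := S / (S + 1).
  have dS : delta * (S + 1) = S by rewrite /delta mulfVK // gt_eqF.
  have d01 : 0 < delta < 1.
    apply/andP; split; first by rewrite /delta divr_gt0.
    by rewrite /delta ltr_pdivrMr // mul1r; lra.
  have strict : strict_investment_plan ip.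
    split.
      move=> C r _; rewrite /ip; case: ifP => _; first by have := x'1 r; lra.
      by case: ifP => _ //; have := y'1 r; lra.
    exists A, r0; split => //; rewrite /ip eqxx.
    by apply/eqP => h; have := x'1 r0; lra.
  have AB : A != B by apply/eqP.
  have [r Hr] := Hni ip delta strict d01.
  move: Hr; rewrite (sum2 AX BX AB); last first.
    by move=> C CA CB; rewrite /ip (negbTE CA) (negbTE CB) big1 // => r' _; rewrite mulr0 mul0r.
  rewrite (sum2 AX BX AB); last first.
    by move=> C CA CB; rewrite /ip (negbTE CA) (negbTE CB).
  have BA : B != A by rewrite eq_sym.
  rewrite /ip eqxx (negbTE BA).
  rewrite eqxx.
  have EA : \sum_r' delta * x' r' * markov_entry t A r r' = delta * (\sum_r' mA r r' * x r' + c).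
    rewrite -[in RHS](mulr1 c) -(mArow r) mulr_sumr -big_split mulr_sumr.
    apply: eq_bigr => r' _; rewrite /x' /mA. by rewrite -mulrA mulrDl [x r' * _]mulrC.
  have EB : \sum_r' delta * y' r' * markov_entry t B r r' = delta * (\sum_r' mB r r' * y r' + c).
    rewrite -[in RHS](mulr1 c) -(mBrow r) mulr_sumr -big_split mulr_sumr.
    by apply: eq_bigr => r' _; rewrite /y' /mB; by rewrite -mulrA mulrDl [y r' * _]mulrC.
  rewrite EA EB -mulrDr.
  have E : \sum_r' mA r r' * x r' + c + (\sum_r' mB r r' * y r' + c) = s r + 1.
    by have := Heq r; rewrite /s /x' /y'; lra.
  rewrite E => Hr.
  have := sS r; case/andP: d01 => d0 d1 => sSr.
  have h : 0 <= S - s r - delta * S + delta * s r.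
    have e : S - s r - delta * S + delta * s r = (1 - delta) * (S - s r) by ring.
    rewrite e.
    by apply: mulr_ge0; lra.
  move: Hr; rewrite [delta * (s r + 1)]mulrDr mulr1 => Hr.
  move: dS; rewrite [delta * (S + 1)]mulrDr mulr1 => dS. move: Hr dS h sSr; rewrite /s; lra.
Qed.
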